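(* For every $d\geq1$ and $\delta>0$ there is a constant $C(d,\delta)$ such that: for every box $B=\prod_{k=1}^d[a_k,b_k]\subset\mathbb{R}^d$, every integer $n\geq1$, and every measure $\mu$ with density $h$ w.r.t. Lebesgue measure satisfying $\delta\leq h\leq\delta^{-1}$ (on $B$), there exists a partition $(B_1,\dots,B_n)$ of $B$ into $n$ sub-boxes such that $\mu(B_i)=\frac1n\mu(B)$ for all $i$, and $$\frac{l(B)}{C(d,\delta)n^{1/d}}\leq l(B_i)\leq L(B_i)\leq\frac{C(d,\delta)}{n^{1/d}}L(B)\quad\text{for all }i.$$
   Context: For a box $B=\prod_{k=1}^d[a_k,b_k]$, $l(B)=\min_k(b_k-a_k)$ and $L(B)=\max_k(b_k-a_k)$ are its minimal and maximal edge lengths. Sub-boxes forming a partition may share boundary faces (of Lebesgue measure zero). *)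

(* Defs.v *)
From HB Require Import structures.
From mathcomp Require Import all_boot all_order all_algebra.
From mathcomp Require Import all_classical all_reals all_analysis.
Set Implicit Arguments. Unset Strict Implicit. Unset Printing Implicit Defensive.
Import Order.TTheory GRing.Theory Num.Theory.
Local Open Scope classical_set_scope.
Local Open Scope ring_scope.

(* Points of R^d are d-tuples of reals (the type n.-tuple T carries, in
   MathComp-Analysis, the product sigma-algebra generated by the coordinate
   projections, i.e. the Borel sigma-algebra of R^d). *)

Definition box (R : realType) (d : nat) (a b : d.-tuple R) : set (d.-tuple R) :=
  [set x | forall k : 'I_d, tnth a k <= tnth x k <= tnth b k].

Definition box_interior (R : realType) (d : nat) (a b : d.-tuple R) : set (d.-tuple R) :=
  [set x | forall k : 'I_d, tnth a k < tnth x k < tnth b k].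

Definition edge (R : realType) (d : nat) (a b : d.-tuple R) (k : 'I_d) : R :=
  tnth b k - tnth a k.

(* L(B): maximal edge length (edges are >= 0 for genuine boxes) *)
Definition maxedge (R : realType) (d : nat) (a b : d.-tuple R) : R :=
  \big[Num.max/0]_(k < d) edge a b k.

(* l(B): minimal edge length; seeding the min with L(B) (which is >= every
   edge) makes this exactly the minimum of the edges when d >= 1. *)
Definition minedge (R : realType) (d : nat) (a b : d.-tuple R) : R :=
  \big[Num.min/maxedge a b]_(k < d) edge a b k.

Definition box_partition (R : realType) (d n : nat) (a b : d.-tuple R)
    (lo hi : 'I_n -> d.-tuple R) : Prop :=
  [/\ forall i k, tnth (lo i) k <= tnth (hi i) k,
      forall i, box (lo i) (hi i) `<=` box a b,
      [set x | exists i, box (lo i) (hi i) x] = box a b &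
      forall i j, i != j -> box_interior (lo i) (hi i) `&` box_interior (lo j) (hi j) = set0].

(* lam is (the Borel restriction of) d-dimensional Lebesgue measure: it gives
   every box its volume.  This determines lam uniquely on the sigma-algebra. *)
Definition is_lebesgue (R : realType) (d : nat)
    (lam : {measure set (d.-tuple R) -> \bar R}) : Prop :=
  forall a b : d.-tuple R, (forall k, tnth a k <= tnth b k) ->
    lam (box a b) = (\prod_(k < d) edge a b k)%:E.

(* Main.v *)
Require Import Defs.
From HB Require Import structures.
From mathcomp Require Import all_boot all_order all_algebra.
From mathcomp Require Import all_classical all_reals all_analysis.
From mathcomp Require Import measurable_realfun ring lra zify.
Import Order.TTheory GRing.Theory Num.Theory numFieldNormedType.Exports.
Set Implicit Arguments. Unset Strict Implicit. Unset Printing Implicit Defensive.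
Local Open Scope classical_set_scope.
Local Open Scope ring_scope.

Definition tset (R : realType) (d : nat) (x : d.-tuple R) (k : 'I_d) (t : R) : d.-tuple R :=
  [tuple (if j == k then t else tnth x j) | j < d].

Lemma tnth_tset (R : realType) (d : nat) (x : d.-tuple R) k t j :
  tnth (tset x k t) j = if j == k then t else tnth x j.
Proof. by rewrite tnth_mktuple. Qed.

Lemma measurable_box (R : realType) (d : nat) (a b : d.-tuple R) :
  measurable (box a b).
Proof.
have -> : box a b = \bigcap_(k in [set: 'I_d]) ((@tnth d R)^~ k @^-1` `[tnth a k, tnth b k]).
  apply/seteqP; split => x /=.
    by move=> H k _ /=; rewrite in_itv /= H.
  by move=> H k; have := H k I; rewrite /= in_itv.
apply: fin_bigcap_measurable; first exact: finite_finset.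
move=> k _; rewrite -[X in measurable X]setTI.
by apply: (measurable_tnth k) => //; exact: measurable_itv.
Qed.

Definition vol (R : realType) (d : nat) (lo hi : d.-tuple R) := \prod_(k < d) edge lo hi k.

Section Tset.
Context (R : realType) (d : nat).
Implicit Types (lo hi x : d.-tuple R).

Lemma inA lo hi k t x : tnth lo k <= t -> t <= tnth hi k ->
  box lo (tset hi k t) x <-> box lo hi x /\ tnth x k <= t.
Proof.
move=> l1 l2; split.
- move=> H; split; last by have := H k; rewrite tnth_tset eqxx => /andP[].
  move=> j; have := H j; rewrite tnth_tset; case: eqP => [->|_] //.
  by move/andP=> [h1 h2]; rewrite h1 (le_trans h2).
- move=> [H xt] j; rewrite tnth_tset; case: eqP => [->|_]; last exact: H.
  by have /andP[-> _] := H k.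
Qed.

Lemma inB lo hi k t x : tnth lo k <= t -> t <= tnth hi k ->
  box (tset lo k t) hi x <-> box lo hi x /\ t <= tnth x k.
Proof.
move=> l1 l2; split.
- move=> H; split; last by have := H k; rewrite tnth_tset eqxx => /andP[].
  move=> j; have := H j; rewrite tnth_tset; case: eqP => [->|_] //.
  by move/andP=> [h1 h2]; rewrite h2 (le_trans l1 h1).
- move=> [H xt] j; rewrite tnth_tset; case: eqP => [->|_]; last exact: H.
  by have /andP[_ ->] := H k; rewrite xt.
Qed.

Lemma inI lo hi k t x : tnth lo k <= t -> t <= tnth hi k ->
  box (tset lo k t) (tset hi k t) x <-> box lo hi x /\ tnth x k = t.
Proof.
move=> l1 l2; split.
- move=> H; split; last by have := H k; rewrite !tnth_tset eqxx => /andP[h1 h2]; apply/eqP; rewrite eq_le h1 h2.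
  move=> j; have := H j; rewrite !tnth_tset; case: eqP => [->|_] //.
  by move/andP=> [h1 h2]; rewrite (le_trans l1 h1) (le_trans h2 l2).
- move=> [H xt] j; rewrite !tnth_tset; case: eqP => [->|_]; last exact: H.
  by rewrite xt lexx.
Qed.

Lemma vol_split lo hi k : vol lo hi =
  edge lo hi k * \prod_(j < d | j != k) edge lo hi j.
Proof. by rewrite /vol (bigD1 k). Qed.

Lemma vol_tset_hi lo hi k t : vol lo (tset hi k t) =
  (t - tnth lo k) * \prod_(j < d | j != k) edge lo hi j.
Proof.
rewrite (vol_split _ _ k) /edge tnth_tset eqxx; congr (_ * _).
by apply: eq_bigr => j /negbTE jk; rewrite /edge tnth_tset jk.
Qed.

Lemma vol_tset_lo lo hi k t : vol (tset lo k t) hi =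
  (tnth hi k - t) * \prod_(j < d | j != k) edge lo hi j.
Proof.
rewrite (vol_split _ _ k) /edge tnth_tset eqxx; congr (_ * _).
by apply: eq_bigr => j /negbTE jk; rewrite /edge tnth_tset jk.
Qed.

Lemma vol_tset_both lo hi k t : vol (tset lo k t) (tset hi k t) = 0.
Proof. by rewrite (vol_split _ _ k) /edge !tnth_tset eqxx subrr mul0r. Qed.

Lemma tset_tset x k s t : tset (tset x k s) k t = tset x k t.
Proof.
by apply: eq_from_tnth => j; rewrite !tnth_tset; case: eqP.
Qed.

End Tset.

Section Meas.
Context (R : realType) (d : nat) (delta : R) (a b : d.-tuple R)
 (lam mu : {measure set (d.-tuple R) -> \bar R}) (h : d.-tuple R -> R).
Hypotheses (dpos : 0 < delta) (Hleb : is_lebesgue lam) (mh : measurable_fun setT h) (h0 : forall x, 0 <= h x)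
 (hb : forall x, box a b x -> delta <= h x <= delta^-1)
 (Hmu : forall A, measurable A -> mu A = (\int[lam]_(x in A) (h x)%:E)%E).

Definition sub (lo hi : d.-tuple R) := forall k,
  tnth a k <= tnth lo k /\ tnth lo k <= tnth hi k /\ tnth hi k <= tnth b k.

Lemma mu_bounds lo hi : sub lo hi ->
  ((delta * vol lo hi)%:E <= mu (box lo hi) <= (delta^-1 * vol lo hi)%:E)%E.
Proof.
move=> S.
have sB : box lo hi `<=` box a b.
  move=> x Hx k; have [h1 [h2 h3]] := S k; have /andP[x1 x2] := Hx k.
  by rewrite (le_trans h1 x1) (le_trans x2 h3).
have lh : forall k, tnth lo k <= tnth hi k by move=> k; case: (S k) => _ [].
rewrite Hmu; last exact: measurable_box.
have mb := measurable_box lo hi.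
apply/andP; split.
- rewrite EFinM -Hleb // -integral_cst //.
  apply: ge0_le_integral => //.
  all: try (by move=> x _; rewrite /= lee_fin ltW).
  all: try (by apply: (proj2 (measurable_EFinP _ h)); exact: measurable_funTS).
  by move=> x Hx; have /andP[+ _] := hb (sB _ Hx); rewrite /= lee_fin.
- rewrite EFinM -Hleb // -integral_cst //.
  apply: ge0_le_integral => //.
  all: try (by move=> x _; rewrite /= lee_fin).
  all: try (by apply: (proj2 (measurable_EFinP _ h)); exact: measurable_funTS).
  by move=> x Hx; have /andP[_ +] := hb (sB _ Hx); rewrite /= lee_fin.
Qed.

Definition mm lo hi := fine (mu (box lo hi)).

Lemma mmE lo hi : sub lo hi -> mu (box lo hi) = (mm lo hi)%:E.
Proof.
move=> S; have /andP[l u] := mu_bounds S; rewrite /mm.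
by move: l u; case: (mu (box lo hi)).
Qed.

Lemma mm_bounds lo hi : sub lo hi ->
  delta * vol lo hi <= mm lo hi <= delta^-1 * vol lo hi.
Proof. by move=> S; have := mu_bounds S; rewrite mmE // !lee_fin. Qed.


Lemma sub_tset_hi lo hi k t : sub lo hi -> tnth lo k <= t <= tnth hi k ->
  sub lo (tset hi k t).
Proof.
move=> S /andP[l1 l2] j; rewrite tnth_tset; case: eqP => [->|_]; last exact: S j.
have [h1 [h2 h4]] := S k.
by split => //; split => //; exact: le_trans l2 h4.
Qed.

Lemma sub_tset_lo lo hi k t : sub lo hi -> tnth lo k <= t <= tnth hi k ->
  sub (tset lo k t) hi.
Proof.
move=> S /andP[l1 l2] j; rewrite tnth_tset; case: eqP => [->|_]; last exact: S j.
have [h4 [_ h3]] := S k.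
by split; [exact: le_trans h4 l1|split].
Qed.

Lemma mm_add lo hi k t : sub lo hi -> tnth lo k <= t <= tnth hi k ->
  mm lo hi = mm lo (tset hi k t) + mm (tset lo k t) hi.
Proof.
move=> S lt; have /andP[l1 l2] := lt.
have SA := sub_tset_hi S lt.
have SB := sub_tset_lo S lt.
have SI : sub (tset lo k t) (tset hi k t).
  apply: sub_tset_hi => //; rewrite tnth_tset eqxx lexx /=.
  by have [_ [hh _]] := SB k; move: hh; rewrite tnth_tset eqxx.
set A := box lo (tset hi k t); set Bs := box (tset lo k t) hi.
set I := box (tset lo k t) (tset hi k t).
have mA : measurable A by exact: measurable_box.
have mB : measurable Bs by exact: measurable_box.
have mI : measurable I by exact: measurable_box.
have I0 : mu I = 0%E.
  have /andP[_ v] := mu_bounds SI; rewrite vol_tset_both mulr0 in v.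
  by apply/eqP; rewrite eq_le v measure_ge0.
have e1 : box lo hi = A `|` (Bs `\` A).
  apply/seteqP; split => x /=.
  - move=> H; have [xt|tx] := leP (tnth x k) t.
      by left; apply/(inA _ l1 l2).
    right; split; first by apply/(inB _ l1 l2); split => //; exact: ltW.
    by move/(inA _ l1 l2) => [_]; rewrite leNgt tx.
  - by case=> [/(inA _ l1 l2) []|[/(inB _ l1 l2) []]].
have e2 : Bs = (Bs `\` A) `|` I.
  apply/seteqP; split => x /=.
  - move=> H; have [xt|tx] := eqVneq (tnth x k) t.
      by right; apply/(inI _ l1 l2); split => //; have /(inB _ l1 l2) [] := H.
    left; split => //; move/(inA _ l1 l2) => [_ xt'].
    have /(inB _ l1 l2) [_ tx'] := H; move/eqP: tx; apply.
    by apply/eqP; rewrite eq_le xt' tx'.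
  - case=> [[]//|/(inI _ l1 l2) [H xt]]; apply/(inB _ l1 l2); split => //.
    by rewrite xt.
have mD : measurable (Bs `\` A) by exact: measurableD.
have hU : mu (box lo hi) = (mu A + mu (Bs `\` A))%E.
  rewrite e1 measureU //; apply/seteqP; split => x //=; by case=> ? [].
have hB : mu Bs = (mu (Bs `\` A) + mu I)%E.
  rewrite [in LHS]e2 measureU //; apply/seteqP; split => x //=.
  move=> [[_ nA] /(inI _ l1 l2) [H xt]]; apply: nA; apply/(inA _ l1 l2).
  by split => //; rewrite xt.
move: hB; rewrite I0 adde0 => hB.
move: hU; rewrite -hB !mmE // => /(congr1 fine) /=.
done.
Qed.

End Meas.



Lemma prod_cst_ord (R : realType) (d : nat) (x : R) : \prod_(j < d) x = x ^+ d.
Proof. by rewrite prodr_const card_ord. Qed.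

Lemma root_pow (R : realType) (d n : nat) : (0 < d)%N ->
  (n%:R `^ (d%:R)^-1 : R) ^+ d = n%:R.
Proof.
move=> d0; rewrite -powR_mulrn ?powR_ge0 // -powRrM mulVf ?powRr1 //.
by rewrite pnatr_eq0 -lt0n.
Qed.

Lemma core (R : realType) (d n : nat) (r : 'I_d -> R) (K D : R) :
 (0 < d)%N -> (0 < n)%N -> 1 <= D -> 1 <= K ->
 (forall j, 0 <= r j) -> (forall i j, r i <= K * r j) ->
 D^-1 / n%:R <= \prod_(j < d) r j -> \prod_(j < d) r j <= D / n%:R ->
 forall j, 1 / (K * D * (n%:R `^ (d%:R)^-1)) <= r j /\
           r j <= K * D / (n%:R `^ (d%:R)^-1).
Proof.
move=> d0 n0 D1 K1 r0 rK pl pu j.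
set nu := n%:R `^ (d%:R)^-1.
have n0' : (0 : R) < n%:R by rewrite ltr0n.
have nu0 : 0 < nu by rewrite powR_gt0.
have nud : nu ^+ d = n%:R by exact: root_pow.
have K0 : 0 < K by lra.
have D0 : 0 < D by lra.
have eK : K * (1 / (K * D * nu)) = (D * nu)^-1.
  by field; rewrite !gt_eqF.
have eK2 : (K * D / nu) / K = D / nu.
  by field; rewrite !gt_eqF.
split.
- rewrite leNgt; apply/negP => H.
  have Hj : K * r j < (D * nu)^-1 by rewrite -eK ltr_pM2l.
  have : \prod_(i < d) r i < (D * nu)^-1 ^+ d.
    apply: (le_lt_trans (y := \prod_(i < d) (K * r j))).
      by apply: ler_prod => i _; rewrite r0 rK.
    by rewrite prod_cst_ord ltrXn2r ?gt_eqF -?lt0n // mulr_ge0 // ltW.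
  rewrite exprVn exprMn nud => H2.
  have DD : D <= D ^+ d by exact: ler_eXnr.
  have key : (D ^+ d * n%:R)^-1 <= D^-1 / n%:R.
    rewrite invfM ler_pM2r ?invr_gt0 // lef_pV2 ?posrE ?exprn_gt0 //.
  by have := lt_le_trans (le_lt_trans pl H2) key; rewrite ltxx.
- rewrite leNgt; apply/negP => H.
  have Hj : D / nu < r j / K.
    by rewrite -eK2 ltr_pM2r ?invr_gt0.
  have Hi : forall i, r j / K <= r i.
    by move=> i; rewrite ler_pdivrMr // mulrC; apply: rK.
  have : (D / nu) ^+ d < \prod_(i < d) r i.
    apply: (lt_le_trans (y := \prod_(i < d) (r j / K))).
      by rewrite prod_cst_ord ltrXn2r ?gt_eqF -?lt0n // divr_ge0 // ltW.
    by apply: ler_prod => i _; rewrite Hi divr_ge0 // ltW.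
  rewrite exprMn exprVn nud => H2.
  have DD : D <= D ^+ d by exact: ler_eXnr.
  have key : D / n%:R <= D ^+ d / n%:R by rewrite ler_pM2r ?invr_gt0.
  by have := le_lt_trans key (lt_le_trans H2 pu); rewrite ltxx.
Qed.
Lemma lip_cont (R : realType) (f : R -> R) (L : R) : 0 <= L ->
  (forall x y, `|f x - f y| <= L * `|x - y|) -> continuous f.
Proof.
move=> L0 Hf x; apply/cvgrPdist_le => e e0.
have he : 0 < e / (L + 1) by rewrite divr_gt0 // ltr_wpDl.
near=> y.
apply: (le_trans (Hf x y)).
have : `|x - y| <= e / (L + 1) by near: y; apply: (@cvgr_dist_le _ _ _ _ _ id x) => //; exact: cvg_id.
move=> hy; apply: (le_trans (ler_wpM2l L0 hy)).
rewrite mulrA ler_pdivrMr ?ltr_wpDl // mulrC ler_wpM2l // ?ltW //.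
by rewrite ltrDl.
Unshelve. all: by end_near.
Qed.

Definition clamp (R : realType) (l u t : R) :=
  if t <= l then l else if u <= t then u else t.

Lemma clamp_in (R : realType) (l u t : R) : l <= u -> l <= clamp l u t <= u.
Proof.
move=> lu; rewrite /clamp; case: (leP t l) => h1; case: (leP u t) => h2; apply/andP; split; lra.
Qed.

Lemma clamp_id (R : realType) (l u t : R) : l <= t <= u -> clamp l u t = t.
Proof.
move=> /andP[h1 h2]; rewrite /clamp; case: (leP t l) => h3; case: (leP u t) => h4 //; lra.
Qed.

Lemma clamp_lip (R : realType) (l u x y : R) : l <= u -> x <= y ->
  0 <= clamp l u y - clamp l u x <= y - x.
Proof.
move=> lu xy; rewrite /clamp.
case: (leP x l) => h1; case: (leP u x) => h2; case: (leP y l) => h3; case: (leP u y) => h4;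
  apply/andP; split; lra.
Qed.

Lemma tset_id (R : realType) (d : nat) (x : d.-tuple R) k : tset x k (tnth x k) = x.
Proof. by apply: eq_from_tnth => j; rewrite tnth_tset; case: eqP => [->|]. Qed.

Definition Pk (R : realType) (d : nat) (lo hi : d.-tuple R) k :=
  \prod_(j < d | j != k) edge lo hi j.

Lemma vol_tset_mid (R : realType) (d : nat) (lo hi : d.-tuple R) k s t :
  vol (tset lo k s) (tset hi k t) = (t - s) * Pk lo hi k.
Proof.
rewrite (vol_split _ _ k) /edge !tnth_tset eqxx; congr (_ * _).
by apply: eq_bigr => j /negbTE jk; rewrite /edge !tnth_tset jk.
Qed.

Section Comb.
Context (R : realType) (d : nat) (a b : d.-tuple R) (delta : R)
  (m : d.-tuple R -> d.-tuple R -> R).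
Hypotheses (dpos : 0 < delta) (d1 : delta <= 1)
  (Hab : forall k, tnth a k < tnth b k)
  (Hm2 : forall lo hi, sub a b lo hi ->
     delta * vol lo hi <= m lo hi <= delta^-1 * vol lo hi)
  (Hm3 : forall lo hi k t, sub a b lo hi -> tnth lo k <= t <= tnth hi k ->
     m lo hi = m lo (tset hi k t) + m (tset lo k t) hi).

Lemma vol_ge0 lo hi : sub a b lo hi -> 0 <= vol lo hi.
Proof.
by move=> S; apply: prodr_ge0 => j _; rewrite subr_ge0; case: (S j) => _ [].
Qed.

Lemma Pk_ge0 lo hi k : sub a b lo hi -> 0 <= Pk lo hi k.
Proof.
by move=> S; apply: prodr_ge0 => j _; rewrite subr_ge0; case: (S j) => _ [].
Qed.

Lemma mlip lo hi k s t : sub a b lo hi -> tnth lo k <= s -> s <= t -> t <= tnth hi k ->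
  0 <= m lo (tset hi k t) - m lo (tset hi k s) <= delta^-1 * ((t - s) * Pk lo hi k).
Proof.
move=> S h1 h2 h3.
have lt : tnth lo k <= t <= tnth hi k by rewrite h3 andbT; exact: le_trans h2.
have S1 := sub_tset_hi S lt.
have ls : tnth lo k <= s <= tnth (tset hi k t) k by rewrite tnth_tset eqxx h1 h2.
rewrite (Hm3 S1 ls) tset_tset addrC addKr.
have S2 := sub_tset_lo S1 ls.
have /andP[u v] := Hm2 S2.
rewrite vol_tset_mid in u v; rewrite v andbT (le_trans _ u) //.
by apply: mulr_ge0; [exact: ltW | apply: mulr_ge0; [rewrite subr_ge0 | exact: Pk_ge0]].
Qed.

Lemma cut lo hi k y : sub a b lo hi -> 0 <= y <= m lo hi ->
  exists t, tnth lo k <= t <= tnth hi k /\ m lo (tset hi k t) = y.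
Proof.
move=> S /andP[y0 ym].
have lh : tnth lo k <= tnth hi k by case: (S k) => _ [].
set g := fun t => m lo (tset hi k (clamp (tnth lo k) (tnth hi k) t)).
have gc : continuous g.
  apply: (@lip_cont _ _ (delta^-1 * Pk lo hi k)).
    by apply: mulr_ge0; [rewrite invr_ge0 ltW | exact: Pk_ge0].
  have H : forall x y, x <= y -> `|g x - g y| <= delta^-1 * Pk lo hi k * `|x - y|.
    move=> x z xz; rewrite /g.
    have /andP[c1 c2] := clamp_lip lh xz.
    have /andP[i1 i2] := clamp_in x lh.
    have /andP[i3 i4] := clamp_in z lh.
    have cxz : clamp (tnth lo k) (tnth hi k) x <= clamp (tnth lo k) (tnth hi k) z.
      by rewrite -subr_ge0.
    have /andP[l1 l2] := mlip S i1 cxz i4.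
    rewrite distrC ger0_norm // [`|x - z|]distrC ger0_norm ?subr_ge0 //.
    have LP : 0 <= delta^-1 * Pk lo hi k.
      by apply: mulr_ge0; [rewrite invr_ge0 ltW | exact: Pk_ge0].
    apply: (le_trans l2); nra.
  move=> x z; case: (leP x z) => xz; first exact: H.
  by rewrite distrC [`|x - z|]distrC; apply: H; exact: ltW.
have gw : {within `[tnth lo k, tnth hi k], continuous g} by exact: continuous_subspaceT.
have ga : g (tnth lo k) = 0.
  rewrite /g clamp_id ?lexx ?lh //.
  have lt : tnth lo k <= tnth lo k <= tnth hi k by rewrite lexx lh.
  have /andP[u v] := Hm2 (sub_tset_hi S lt).
  rewrite vol_tset_hi subrr mul0r mulr0 in u; rewrite vol_tset_hi subrr mul0r mulr0 in v.
  by apply/eqP; rewrite eq_le u v.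
have gb : g (tnth hi k) = m lo hi.
  by rewrite /g clamp_id ?lexx ?lh // tset_id.
have m0 : 0 <= m lo hi by exact: le_trans y0 ym.
have iv : Num.min (g (tnth lo k)) (g (tnth hi k)) <= y <= Num.max (g (tnth lo k)) (g (tnth hi k)).
  by rewrite ga gb (min_idPl m0) (max_idPr m0) y0 ym.
have [c] := IVT lh gw iv.
rewrite in_itv /= => /andP[c1 c2] gcy.
exists c; rewrite c1 c2; split => //.
by move: gcy; rewrite /g clamp_id ?c1.
Qed.



Hypothesis Hd : (0 < d)%N.

Definition rr lo hi j := edge lo hi j / edge a b j.
Definition KK := 3 / delta ^+ 2.
Definition asp lo hi := forall i j, rr lo hi i <= KK * rr lo hi j.
Definition pos (lo hi : d.-tuple R) := forall j, tnth lo j < tnth hi j.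
Definition inside (lo hi : d.-tuple R) (p : d.-tuple R * d.-tuple R) :=
  forall j, tnth lo j <= tnth p.1 j /\ tnth p.2 j <= tnth hi j.
Definition drel (p q : d.-tuple R * d.-tuple R) : bool :=
  `[< box_interior p.1 p.2 `&` box_interior q.1 q.2 = set0 >].

Lemma KK1 : 1 <= KK.
Proof.
rewrite /KK ler_pdivlMr ?exprn_gt0 // mul1r.
have : delta ^+ 2 <= 1 by rewrite expr_le1 // ltW.
lra.
Qed.

Lemma eab j : 0 < edge a b j.
Proof. by rewrite /edge subr_gt0. Qed.

Lemma asp_child (r r' : 'I_d -> R) k :
  (forall i j, r i <= KK * r j) -> (forall j, r j <= r k) ->
  (forall j, j != k -> r' j = r j) -> r k <= KK * r' k -> r' k <= r k ->
  0 <= r' k -> forall i j, r' i <= KK * r' j.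
Proof.
move=> A M E h1 h2 h3 i j.
have K1 := KK1.
case: (eqVneq i k) => [->|ik]; case: (eqVneq j k) => [->|jk].
- by rewrite ler_peMl.
- by rewrite (E j jk); exact: le_trans h2 (A k j).
- by rewrite (E i ik); exact: le_trans (M i) h1.
- by rewrite (E i ik) (E j jk).
Qed.

Lemma key_ineq (P w w' mu nu : R) : 0 < P -> delta * (w * P) <= mu -> mu / 3 <= nu ->
  nu <= delta^-1 * (w' * P) -> w <= KK * w'.
Proof.
move=> P0 h1 h2 h3.
have e : delta * delta^-1 = 1 by rewrite mulfV ?gt_eqF.
have h4 : delta * (w * P) <= 3 * (delta^-1 * (w' * P)) by lra.
have h5 : delta * (delta * (w * P)) <= 3 * (w' * P).
  have := ler_wpM2l (ltW dpos) h4.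
  have -> : delta * (3 * (delta^-1 * (w' * P))) = 3 * (w' * P).
    by field; rewrite gt_eqF.
  done.
have h6 : delta ^+ 2 * w <= 3 * w'.
  by rewrite -(ler_pM2r P0) expr2 -!mulrA.
rewrite /KK mulrAC ler_pdivlMr ?exprn_gt0 // mulrC.
done.
Qed.

Lemma build N : forall c, (0 < c)%N -> (c <= N)%N -> forall lo hi,
  sub a b lo hi -> pos lo hi -> asp lo hi ->
  exists s : seq (d.-tuple R * d.-tuple R), [/\ size s = c,
   (forall p, p \in s -> [/\ inside lo hi p, sub a b p.1 p.2, pos p.1 p.2, asp p.1 p.2 &
        m p.1 p.2 = m lo hi / c%:R]),
   (forall x, box lo hi x -> exists2 p, p \in s & box p.1 p.2 x) &
   pairwise drel s].
Proof.
elim: N => [|N IH] c c0 cN lo hi S Po A; first by lia.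
case: (eqVneq c 1) => [->|cne1].
  exists [:: (lo, hi)]; split => //.
  - move=> p; rewrite inE => /eqP -> /=; split => //; last by rewrite divr1.
  - by move=> x Hx; exists (lo, hi); rewrite ?inE.
have c2 : (2 <= c)%N by lia.
set c1 := (c %/ 2)%N; set c2' := (c - c1)%N.
have hc1 : (0 < c1)%N by rewrite /c1; lia.
have hc2 : (0 < c2')%N by rewrite /c2' /c1; lia.
have hc1N : (c1 <= N)%N by rewrite /c1; lia.
have hc2N : (c2' <= N)%N by rewrite /c2' /c1; lia.
have h3c1 : (c <= 3 * c1)%N by rewrite /c1; lia.
have h3c2 : (c <= 3 * c2')%N by rewrite /c2' /c1; lia.
have csum : (c1 + c2')%N = c by rewrite /c2' /c1; lia.
have cR : (0 : R) < c%:R by rewrite ltr0n; lia.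
have c1R : (0 : R) < c1%:R by rewrite ltr0n.
have c2R : (0 : R) < c2'%:R by rewrite ltr0n.
have f1 : 1 / 3 <= c1%:R / c%:R :> R.
  have : c%:R <= 3 * c1%:R :> R by rewrite -natrM ler_nat.
  rewrite ler_pdivlMr //; lra.
have f2 : 1 / 3 <= c2'%:R / c%:R :> R.
  have : c%:R <= 3 * c2'%:R :> R by rewrite -natrM ler_nat.
  rewrite ler_pdivlMr //; lra.
have fsum : c1%:R / c%:R + c2'%:R / c%:R = 1 :> R.
  by rewrite -mulrDl -natrD csum mulfV ?gt_eqF.
pose i0 : 'I_d := Ordinal Hd.
have [k _ kmax] := @Order.TotalTheory.arg_maxP _ R 'I_d i0 xpredT (rr lo hi) isT.
have {}kmax : forall j, rr lo hi j <= rr lo hi k by move=> j; exact: kmax.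
have lhk : tnth lo k <= tnth hi k by exact: ltW.
have mlh := Hm2 S; have vol0 := vol_ge0 S.
have m0 : 0 <= m lo hi.
  by case/andP: mlh => + _; apply: le_trans; apply: mulr_ge0 => //; exact: ltW.
set y := c1%:R / c%:R * m lo hi.
have y0 : 0 <= y <= m lo hi.
  apply/andP; split; first by apply: mulr_ge0 => //; apply: divr_ge0; exact: ltW.
  rewrite /y -[X in _ <= X]mul1r; apply: ler_wpM2r => //.
  have := fsum.
  have : 0 <= c2'%:R / c%:R :> R by apply: divr_ge0; exact: ltW.
  lra.
have [t [/andP[t1 t2] mL]] := cut k S y0.
have lt : tnth lo k <= t <= tnth hi k by rewrite t1 t2.
set hL := tset hi k t; set lR := tset lo k t.
have SL : sub a b lo hL := sub_tset_hi S lt.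
have SR : sub a b lR hi := sub_tset_lo S lt.
have mR : m lR hi = c2'%:R / c%:R * m lo hi.
  have := Hm3 S lt; rewrite -/hL -/lR mL /y => e.
  have -> : c2'%:R / c%:R = 1 - c1%:R / c%:R :> R by lra.
  lra.
have P0 : 0 < Pk lo hi k.
  by apply: prodr_gt0 => j _; rewrite /edge subr_gt0.
have vlh : vol lo hi = (tnth hi k - tnth lo k) * Pk lo hi k by rewrite (vol_split _ _ k).
have /andP[mlo _] := mlh.
have /andP[_ mLu] := Hm2 SL.
have /andP[_ mRu] := Hm2 SR.
rewrite /hL vol_tset_hi in mLu; rewrite /lR vol_tset_lo in mRu.
rewrite vlh in mlo.
have wL : tnth hi k - tnth lo k <= KK * (t - tnth lo k).
  apply: (key_ineq P0 mlo _ mLu); rewrite mL /y.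
  have : 1 / 3 * m lo hi <= c1%:R / c%:R * m lo hi by apply: ler_wpM2r.
  lra.
have wR : tnth hi k - tnth lo k <= KK * (tnth hi k - t).
  apply: (key_ineq P0 mlo _ mRu); rewrite mR.
  have : 1 / 3 * m lo hi <= c2'%:R / c%:R * m lo hi by apply: ler_wpM2r.
  lra.
have K0 : 0 < KK by have := KK1; lra.
have w0 : 0 < tnth hi k - tnth lo k by rewrite subr_gt0.
have tL : tnth lo k < t.
  have : 0 < KK * (t - tnth lo k) by exact: lt_le_trans w0 wL.
  by rewrite pmulr_rgt0 // subr_gt0.
have tR : t < tnth hi k.
  have : 0 < KK * (tnth hi k - t) by exact: lt_le_trans w0 wR.
  by rewrite pmulr_rgt0 // subr_gt0.
have posL : pos lo hL.
  by move=> j; rewrite /hL tnth_tset; case: eqP => [->|_] //; exact: Po.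
have posR : pos lR hi.
  by move=> j; rewrite /lR tnth_tset; case: eqP => [->|_] //; exact: Po.
have aspL : asp lo hL.
  apply: (asp_child A kmax (k := k)).
  - by move=> j jk; rewrite /rr /edge /hL tnth_tset (negbTE jk).
  - rewrite /rr /edge /hL tnth_tset eqxx mulrA ler_pM2r ?invr_gt0 ?eab //.
  - rewrite /rr /edge /hL tnth_tset eqxx ler_pM2r ?invr_gt0 ?eab //; lra.
  - by rewrite /rr /edge /hL tnth_tset eqxx divr_ge0 // ?subr_ge0 ?ltW // eab.
have aspR : asp lR hi.
  apply: (asp_child A kmax (k := k)).
  - by move=> j jk; rewrite /rr /edge /lR tnth_tset (negbTE jk).
  - rewrite /rr /edge /lR tnth_tset eqxx mulrA ler_pM2r ?invr_gt0 ?eab //.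
  - rewrite /rr /edge /lR tnth_tset eqxx ler_pM2r ?invr_gt0 ?eab //; lra.
  - by rewrite /rr /edge /lR tnth_tset eqxx divr_ge0 // ?subr_ge0 ?ltW // eab.
have [s1 [z1 P1 C1 D1]] := IH c1 hc1 hc1N lo hL SL posL aspL.
have [s2 [z2 P2 C2 D2]] := IH c2' hc2 hc2N lR hi SR posR aspR.
exists (s1 ++ s2); split.
- by rewrite size_cat z1 z2 csum.
- move=> p; rewrite mem_cat => /orP[] pin.
  + have [iL sp pp ap mp] := P1 p pin; split => //.
      move=> j; have [u v] := iL j; split => //; apply: (le_trans v).
      by rewrite /hL tnth_tset; case: eqP => [->|] //.
    rewrite mp mL /y; field; rewrite !gt_eqF //.
  + have [iR sp pp ap mp] := P2 p pin; split => //.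
      move=> j; have [u v] := iR j; split => //; apply: le_trans u.
      by rewrite /lR tnth_tset; case: eqP => [->|] //.
    rewrite mp mR; field; rewrite !gt_eqF //.
- move=> x Hx; case: (leP (tnth x k) t) => xt.
  + have HL : box lo hL x by apply/(inA _ t1 t2).
    by have [p pin px] := C1 x HL; exists p => //; rewrite mem_cat pin.
  + have HR : box lR hi x by apply/(inB _ t1 t2); split => //; exact: ltW.
    by have [p pin px] := C2 x HR; exists p => //; rewrite mem_cat pin orbT.
- rewrite pairwise_cat D1 D2 !andbT; apply/allrelP => p q pin qin.
  have [iL _ _ _ _] := P1 p pin; have [iR _ _ _ _] := P2 q qin.
  apply/asboolP; apply/seteqP; split => x //= [Hp Hq].
  have /andP[_ u1] := Hp k; have /andP[u2 _] := Hq k.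
  have [_ v1] := iL k; have [v2 _] := iR k.
  move: v1 v2; rewrite /hL /lR !tnth_tset eqxx => v1 v2.
  by have := lt_trans (lt_le_trans u1 v1) (le_lt_trans v2 u2); rewrite ltxx.
Qed.

End Comb.

Section BigMM.
Context (R : realType) (d : nat).

Lemma bigmin_le_seq (F : 'I_d -> R) x0 (r : seq 'I_d) j : j \in r ->
  \big[Num.min/x0]_(i <- r) F i <= F j.
Proof.
elim: r => // i r IH; rewrite inE big_cons ge_min; case/orP => [/eqP ->|jr].
  by rewrite lexx.
by rewrite IH ?orbT.
Qed.

Lemma le_bigmax_seq (F : 'I_d -> R) x0 (r : seq 'I_d) j : j \in r ->
  F j <= \big[Num.max/x0]_(i <- r) F i.
Proof.
elim: r => // i r IH; rewrite inE big_cons le_max; case/orP => [/eqP ->|jr].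
  by rewrite lexx.
by rewrite IH ?orbT.
Qed.

Lemma minedge_le (lo hi : d.-tuple R) j : minedge lo hi <= edge lo hi j.
Proof. by apply: bigmin_le_seq; rewrite mem_index_enum. Qed.

Lemma le_maxedge (lo hi : d.-tuple R) j : edge lo hi j <= maxedge lo hi.
Proof. by apply: le_bigmax_seq; rewrite mem_index_enum. Qed.

Lemma minedge_ge (lo hi : d.-tuple R) X :
  (forall j, X <= edge lo hi j) -> X <= maxedge lo hi -> X <= minedge lo hi.
Proof.
move=> H H0; rewrite /minedge; elim/big_rec: _ => // i x _ Hx.
by rewrite le_min H Hx.
Qed.

Lemma maxedge_le (lo hi : d.-tuple R) Y :
  (forall j, edge lo hi j <= Y) -> 0 <= Y -> maxedge lo hi <= Y.
Proof.
move=> H H0; rewrite /maxedge; elim/big_rec: _ => // i x _ Hx.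
by rewrite ge_max H Hx.
Qed.

End BigMM.

Lemma ratio_bounds (R : realFieldType) (delta V v mu n : R) : 0 < delta -> 0 < V -> 0 < n ->
  delta * V <= mu -> mu <= delta^-1 * V ->
  delta * v <= mu / n -> mu / n <= delta^-1 * v ->
  ((delta ^+ 2)^-1)^-1 / n <= v / V <= (delta ^+ 2)^-1 / n.
Proof.
move=> d0 V0 n0 h1 h2 h3 h4.
have e1 : delta * V / n <= delta^-1 * v by apply: le_trans h4; rewrite ler_pM2r ?invr_gt0.
have e2 : delta * v <= delta^-1 * V / n by apply: le_trans h3 _; rewrite ler_pM2r ?invr_gt0.
have E1 : delta ^+ 2 / n * V <= v.
  have := ler_wpM2l (ltW d0) e1.
  have -> : delta * (delta^-1 * v) = v by field; rewrite gt_eqF.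
  have -> : delta * (delta * V / n) = delta ^+ 2 / n * V by rewrite expr2; field; rewrite gt_eqF.
  done.
have E2 : v <= (delta ^+ 2)^-1 / n * V.
  have := ler_wpM2l (ltW (eq_ind_r is_true d0 (invr_gt0 delta) : 0 < delta^-1)) e2.
  have -> : delta^-1 * (delta * v) = v by field; rewrite gt_eqF.
  have -> : delta^-1 * (delta^-1 * V / n) = (delta ^+ 2)^-1 / n * V.
    by rewrite expr2; field; rewrite !gt_eqF.
  done.
rewrite invrK; apply/andP; split.
- by rewrite ler_pdivlMr.
- by rewrite ler_pdivrMr.
Qed.

Theorem lemma2p6 (R : realType) (d : nat) (delta : R) :
  (0 < d)%N -> 0 < delta ->
  exists C : R, 0 < C /\
  forall (a b : d.-tuple R) (n : nat)
         (lam : {measure set (d.-tuple R) -> \bar R})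
         (h : d.-tuple R -> R)
         (mu : {measure set (d.-tuple R) -> \bar R}),
    (forall k, tnth a k < tnth b k) ->
    (0 < n)%N ->
    is_lebesgue lam ->
    measurable_fun [set: d.-tuple R] h ->
    (forall x, 0 <= h x) ->
    (forall x, box a b x -> delta <= h x <= delta^-1) ->
    (forall A, measurable A -> mu A = (\int[lam]_(x in A) (h x)%:E)%E) ->
    exists lo hi : 'I_n -> d.-tuple R,
      box_partition a b lo hi /\
      forall i : 'I_n,
        [/\ mu (box (lo i) (hi i)) = ((n%:R)^-1%:E * mu (box a b))%E,
            minedge a b / (C * (n%:R `^ (d%:R)^-1)) <= minedge (lo i) (hi i),
            minedge (lo i) (hi i) <= maxedge (lo i) (hi i) &
            maxedge (lo i) (hi i) <= C / (n%:R `^ (d%:R)^-1) * maxedge a b].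
Proof.
move=> Hd dpos.
exists (KK delta * (delta ^+ 2)^-1); split.
  by rewrite /KK mulr_gt0 // ?divr_gt0 // ?invr_gt0 exprn_gt0.
move=> a b n lam h mu Hab n0 Hleb mh h0 hb Hmu.
have d1 : delta <= 1.
  have aa : box a b a by move=> k; rewrite lexx ltW.
  have /andP[u v] := hb a aa.
  have dd : delta <= delta^-1 := le_trans u v.
  have : delta ^+ 2 <= 1.
    have := ler_wpM2l (ltW dpos) dd.
    by rewrite mulfV ?gt_eqF // expr2.
  by rewrite expr_le1 // ltW.
set m := mm mu.
have Hm2 := mm_bounds dpos Hleb mh h0 hb Hmu.
have Hm3 := mm_add dpos Hleb mh h0 hb Hmu.
have Sab : sub a b a b by move=> k; rewrite !lexx ltW.
have Aab : asp a b delta a b.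
  by move=> i j; rewrite /rr !divff ?gt_eqF ?eab // mulr1; exact: KK1.
have [s [sz Ps Cs Ds]] := build dpos d1 Hab Hm2 Hm3 Hd n0 (leqnn n) Sab Hab Aab.
pose x0 := (a, b).
pose lo := fun i : 'I_n => (nth x0 s i).1.
pose hi := fun i : 'I_n => (nth x0 s i).2.
have pin : forall i : 'I_n, nth x0 s i \in s by move=> i; rewrite mem_nth // sz.
have incl : forall i, box (lo i) (hi i) `<=` box a b.
  move=> i x Hx k; have [ins _ _ _ _] := Ps _ (pin i); have [u v] := ins k.
  have /andP[x1 x2] := Hx k; by rewrite (le_trans u x1) (le_trans x2 v).
have i0 : 'I_d := Ordinal Hd.
exists lo, hi; split.
- split.
  + by move=> i k; have [_ _ pp _ _] := Ps _ (pin i); exact: ltW (pp k).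
  + exact: incl.
  + apply/seteqP; split => x /=.
    * by move=> [i Hx]; exact: incl Hx.
    * move=> Hx; have [p pin' px] := Cs x Hx.
      have ip : (index p s < n)%N by rewrite -sz index_mem.
      by exists (Ordinal ip); rewrite /lo /hi /= nth_index.
  + move=> i j ij.
    have PW := elimT (pairwiseP x0) Ds.
    have gi : forall k : 'I_n, (k : nat) \in gtn (size s) by move=> k; rewrite inE sz ltn_ord.
    case: (ltngtP i j) => [lij|lji|eij].
    * by have /asboolP := PW i j (gi i) (gi j) lij.
    * by have /asboolP := PW j i (gi j) (gi i) lji; rewrite setIC.
    * by move: ij; rewrite (val_inj eij) eqxx.
- move=> i; have [ins Sp pp ap mp] := Ps _ (pin i).
  have vab : 0 < vol a b by apply: prodr_gt0 => j _; exact: eab.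
  have D1 : 1 <= (delta ^+ 2)^-1.
    by rewrite invf_ge1 ?exprn_gt0 // expr_le1 // ltW.
  have nR : (0 : R) < n%:R by rewrite ltr0n.
  have /andP[mab1 mab2] := Hm2 _ _ Sab.
  have /andP[mp1 mp2] := Hm2 _ _ Sp.
  rewrite mp in mp1 mp2.
  have /andP[pl pu] := ratio_bounds dpos vab nR mab1 mab2 mp1 mp2.
  have eq : vol (nth x0 s i).1 (nth x0 s i).2 / vol a b =
      \prod_(j < d) rr a b (nth x0 s i).1 (nth x0 s i).2 j.
    by rewrite /rr prodf_div.
  rewrite eq in pl pu.
  have r0 : forall j, 0 <= rr a b (nth x0 s i).1 (nth x0 s i).2 j.
    by move=> j; rewrite /rr divr_ge0 // ?subr_ge0 ?ltW ?eab // pp.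
  have CB := core Hd n0 D1 (KK1 dpos d1) r0 ap pl pu.
  have ee : forall j, edge (lo i) (hi i) j = rr a b (lo i) (hi i) j * edge a b j.
    by move=> j; rewrite /rr divfK // gt_eqF // eab.
  set nu := n%:R `^ (d%:R)^-1.
  have nu0 : 0 < nu by rewrite powR_gt0.
  set C := KK delta * (delta ^+ 2)^-1.
  have C0 : 0 < C by rewrite mulr_gt0 // ?invr_gt0 ?exprn_gt0 // (lt_le_trans ltr01 (KK1 dpos d1)).
  have lowj : forall j, minedge a b / (C * nu) <= edge (lo i) (hi i) j.
    move=> j; have [c1 _] := CB j; rewrite ee.
    apply: (le_trans (y := edge a b j / (C * nu))).
      by apply: ler_wpM2r; [rewrite invr_ge0 ltW // mulr_gt0 | exact: minedge_le].
    have h1 := ler_wpM2r (ltW (eab Hab j)) c1.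
    apply: le_trans h1; rewrite mul1r mulrC; exact: lexx.
  have upj : forall j, edge (lo i) (hi i) j <= C / nu * maxedge a b.
    move=> j; have [_ c2] := CB j; rewrite ee.
    apply: (le_trans (y := C / nu * edge a b j)).
      by apply: ler_wpM2r => //; exact: ltW (eab Hab j).
    by apply: ler_wpM2l; [rewrite divr_ge0 ?ltW | exact: le_maxedge].
  split.
  + rewrite (mmE dpos Hleb mh h0 hb Hmu Sp) (mmE dpos Hleb mh h0 hb Hmu Sab).
    by rewrite (_ : mm mu (nth x0 s i).1 (nth x0 s i).2 = mm mu a b / n%:R) ?mp // -EFinM mulrC.
  + apply: minedge_ge => //; apply: le_trans (lowj i0) _; exact: le_maxedge.
  + exact: le_trans (minedge_le _ _ i0) (le_maxedge _ _ i0).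
  + apply: maxedge_le => //; apply: mulr_ge0; first by rewrite divr_ge0 ?ltW.
    exact: le_trans (ltW (eab Hab i0)) (le_maxedge _ _ i0).
Qed.
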